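(* Let $\Gamma=(V,E)$ be a graph of order $n$, minimum degree $\delta$ and maximum degree $\Delta$. (a) If $S$ is an $r$-dependent set in $\Gamma$ with $r\in\{0,\dots,\lfloor\frac{\delta-1}{2}\rfloor\}$, then $\overline{S}$ is a global offensive $(\delta-2r)$-alliance in $\Gamma$. (b) If $S$ is a global offensive $k$-alliance in $\Gamma$ with $k\in\{2-\Delta,\dots,\Delta\}$, then $\overline{S}$ is a $\left\lfloor\frac{\Delta-k}{2}\right\rfloor$-dependent set in $\Gamma$. (c) If $\Gamma$ is $\delta$-regular with $\delta>0$, then for $r\in\{0,\dots,\lfloor\frac{\delta-1}{2}\rfloor\}$, $S$ is an $r$-dependent set in $\Gamma$ if and only if $\overline{S}$ is a global offensive $(\delta-2r)$-alliance in $\Gamma$.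
   Context: Graphs are finite and simple. For $S\subseteq V$ and $v\in V$, $\delta_S(v)$ is the number of neighbours of $v$ in $S$, $\overline{S}=V\setminus S$, and $\partial(S)$ is the set of vertices of $\overline{S}$ with at least one neighbour in $S$. For an integer $k$, a nonempty set $S\subseteq V$ is an offensive $k$-alliance if $\delta_S(v)\ge\delta_{\overline{S}}(v)+k$ for every $v\in\partial(S)$; it is a global offensive $k$-alliance if moreover it is dominating (every vertex of $\overline{S}$ has a neighbour in $S$). A set $S\subseteq V$ is $r$-dependent if $\delta_S(v)\le r$ for every $v\in S$ (the induced subgraph on $S$ has maximum degree at most $r$). *)

(* Defs.v *)
From HB Require Import structures.
From mathcomp Require Import all_boot all_order all_algebra.
Set Implicit Arguments. Unset Strict Implicit. Unset Printing Implicit Defensive.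
Import Order.TTheory GRing.Theory Num.Theory.

Definition simple_graph (T : finType) (e : rel T) : Prop := symmetric e /\ irreflexive e.

Definition nbr (T : finType) (e : rel T) (v : T) (S : {set T}) : nat :=
  #|[set u in S | e v u]|.

Definition deg (T : finType) (e : rel T) (v : T) : nat := #|[set u | e v u]|.

(* minimum / maximum degree (for a nonempty vertex set; degrees are < #|T|) *)
Definition mindeg (T : finType) (e : rel T) : nat := \big[minn/#|T|]_(v : T) deg e v.
Definition maxdeg (T : finType) (e : rel T) : nat := \max_(v : T) deg e v.

Definition boundary (T : finType) (e : rel T) (S : {set T}) : {set T} :=
  [set v in ~: S | [exists u in S, e v u]].

Definition offensive_alliance (T : finType) (e : rel T) (k : int) (S : {set T}) : Prop :=
  S != set0 /\
  forall v, v \in boundary e S -> ((nbr e v S)%:Z >= (nbr e v (~: S))%:Z + k)%R.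

Definition dominating (T : finType) (e : rel T) (S : {set T}) : Prop :=
  forall v, v \in ~: S -> exists2 u, u \in S & e v u.

Definition global_offensive_alliance (T : finType) (e : rel T) (k : int) (S : {set T}) : Prop :=
  offensive_alliance e k S /\ dominating e S.

Definition dependent (T : finType) (e : rel T) (r : nat) (S : {set T}) : Prop :=
  forall v, v \in S -> nbr e v S <= r.

(* Main.v *)
Require Import Defs.
From HB Require Import structures.
From mathcomp Require Import all_boot all_order all_algebra.
From mathcomp Require Import intdiv zify.
Import Order.TTheory GRing.Theory Num.Theory.

Lemma deg_split (T : finType) (e : rel T) v (S : {set T}) :
  deg e v = nbr e v S + nbr e v (~: S).
Proof.
rewrite /deg /nbr -(cardsID S [set u | e v u]); congr (_ + _);
  apply: eq_card => u; rewrite !inE; [by rewrite andbC | by rewrite andbC].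
Qed.

Lemma mindeg_le (T : finType) (e : rel T) v : mindeg e <= deg e v.
Proof.
rewrite /mindeg unlock /reducebig.
have : v \in index_enum T by rewrite mem_index_enum.
elim: (index_enum T) => [//|x s IH] /=; rewrite inE => /orP [/eqP <-|vs].
  exact: geq_minl.
exact: leq_trans (geq_minr _ _) (IH vs).
Qed.

Lemma maxdeg_ge (T : finType) (e : rel T) v : deg e v <= maxdeg e.
Proof. exact: (leq_bigmax (F := fun v => deg e v)). Qed.

Lemma partA (T : finType) (e : rel T) (r : nat) (S : {set T}) :
  0 < #|T| ->
  (r%:Z <= (((mindeg e)%:Z - 1) %/ 2)%Z)%R ->
  dependent e r S ->
  global_offensive_alliance e ((mindeg e)%:Z - (2 * r)%:Z)%R (~: S).
Proof.
move=> hT hr hS.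
have h2 : 2 * r + 1 <= mindeg e by lia.
have key : forall v, v \in S -> 0 < nbr e v (~: S).
  move=> v vS; have := hS v vS; have := @deg_split T e v S;
  have := @mindeg_le T e v; lia.
have dom : dominating e (~: S).
  move=> v; rewrite setCK => vS; have := key v vS.
  rewrite /nbr card_gt0 => /set0Pn [u]; rewrite !inE => /andP [uS evu].
  by exists u; rewrite ?inE.
split=> //; split.
  apply/set0Pn; case/card_gt0P: hT => v _.
  case vS: (v \in S); last by exists v; rewrite inE vS.
  have := key v vS; rewrite /nbr card_gt0 => /set0Pn [u]; rewrite !inE.
  by case/andP=> uS _; exists u; rewrite inE.
move=> v; rewrite /boundary !inE negbK => /andP [vS _].
rewrite setCK; have := hS v vS; have := @deg_split T e v S;
have := @mindeg_le T e v; lia.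
Qed.

Lemma in_bnd (T : finType) (e : rel T) (S : {set T}) v :
  dominating e S -> v \in ~: S -> v \in boundary e S.
Proof.
move=> hd vS; case: (hd v vS) => u uS evu.
rewrite /boundary inE vS /=; apply/existsP; exists u; by rewrite uS.
Qed.

Theorem mainTheorem2 (T : finType) (e : rel T) :
  simple_graph e -> 0 < #|T| ->
  (* (a) *)
  (forall (r : nat) (S : {set T}),
      (r%:Z <= (((mindeg e)%:Z - 1) %/ 2)%Z)%R ->
      dependent e r S ->
      global_offensive_alliance e ((mindeg e)%:Z - (2 * r)%:Z)%R (~: S)) /\
  (* (b) *)
  (forall (k : int) (S : {set T}),
      (2%:Z - (maxdeg e)%:Z <= k)%R -> (k <= (maxdeg e)%:Z)%R ->
      global_offensive_alliance e k S ->
      dependent e (`|((maxdeg e)%:Z - k)%R|%N)./2 (~: S)) /\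
  (* (c) *)
  ((forall v, deg e v = mindeg e) -> 0 < mindeg e ->
   forall (r : nat) (S : {set T}),
      (r%:Z <= (((mindeg e)%:Z - 1) %/ 2)%Z)%R ->
      (dependent e r S <->
       global_offensive_alliance e ((mindeg e)%:Z - (2 * r)%:Z)%R (~: S))).
Proof.
move=> _ hT; split; first by move=> r S; exact: partA.
split.
  move=> k S h1 h2 [[_ ho] hd] v vS.
  have := ho v (@in_bnd T e _ _ hd vS); have := @deg_split T e v S;
  have := @maxdeg_ge T e v; lia.
move=> hreg _ r S hr; split; first exact: partA.
move=> [[_ ho] hd] v vS.
have vb : v \in ~: (~: S) by rewrite setCK.
have := ho v (@in_bnd T e _ _ hd vb); rewrite setCK; have := @deg_split T e v S;
have := hreg v; lia.
Qed.
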